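(* Let $\mathcal H$ be an infinite-dimensional complex Hilbert space and let $\mathbf A=(A_1,\dots,A_m)$ be an $m$-tuple of bounded self-adjoint operators on $\mathcal H$. For each positive integer $k$, let $S_k(\mathbf A)$ be the set of star centers of $\Lambda_k(\mathbf A)$. Then $$\Lambda_\infty(\mathbf A)=\bigcap_{k\ge1}S_k(\mathbf A)=\bigcap_{k\ge1}\Lambda_k(\mathbf A)=\bigcap\{W(\mathbf A+\mathbf F):\ \mathbf F\in\mathcal S(\mathcal H)^m\cap\mathcal F(\mathcal H)^m\}.$$ Consequently, $\Lambda_\infty(\mathbf A)$ is convex.
   Context: $\mathcal S(\mathcal H)$ is the set of bounded self-adjoint operators on $\mathcal H$ and $\mathcal F(\mathcal H)$ the set of finite-rank operators; for $\mathbf F=(F_1,\dots,F_m)$, $\mathbf A+\mathbf F=(A_1+F_1,\dots,A_m+F_m)$. For a positive integer $k$, $\Lambda_k(\mathbf A)=\{(a_1,\dots,a_m)\in\mathbb R^m:$ there is an orthogonal projection $P$ of rank $k$ on $\mathcal H$ with $PA_jP=a_jP$ for all $j\}$; $\Lambda_\infty(\mathbf A)$ is defined the same way with $P$ of infinite rank. $W(\mathbf B)=\{(\langle B_1x,x\rangle,\dots,\langle B_mx,x\rangle):x\in\mathcal H,\ \|x\|=1\}$ is the joint numerical range. A point $\mathbf c\in S$ is a star center of $S\subseteq\mathbb R^m$ if for every $\mathbf b\in S$ the segment joining $\mathbf c$ and $\mathbf b$ lies in $S$. *)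

(* Defs.v *)
From mathcomp Require Import all_boot all_order all_algebra.
From mathcomp Require Import reals.
From mathcomp.real_closed Require Import complex.

Set Implicit Arguments.
Unset Strict Implicit.
Unset Printing Implicit Defensive.

Import Order.TTheory GRing.Theory Num.Theory.
Local Open Scope ring_scope.

Section Hilbert.
Variables (R : realType) (V : lmodType R[i]) (ip : V -> V -> R[i]).

Definition is_inner_product : Prop :=
  [/\ (forall (a : R[i]) (x y z : V), ip (a *: x + y) z = a * ip x z + ip y z),
      (forall x y : V, ip y x = conjc (ip x y))
    & (forall x : V, x != 0 -> 0 < complex.Re (ip x x))].

Definition hnorm (x : V) : R := Num.sqrt (complex.Re (ip x x)).

Definition complete_ip : Prop :=
  forall u : nat -> V,
    (forall e : R, 0 < e -> exists N : nat, forall p q : nat,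
        (N <= p)%N -> (N <= q)%N -> hnorm (u p - u q) < e) ->
    exists l : V, forall e : R, 0 < e -> exists N : nat, forall p : nat,
        (N <= p)%N -> hnorm (u p - l) < e.

Definition hilbert_space : Prop := is_inner_product /\ complete_ip.

Definition subspace_dim (S : V -> Prop) (n : nat) : Prop :=
  exists f : 'I_n -> V,
    [/\ (forall i, S (f i)),
        (forall c : 'I_n -> R[i], \sum_(i < n) c i *: f i = 0 -> forall i, c i = 0)
      & (forall x, S x -> exists c : 'I_n -> R[i], x = \sum_(i < n) c i *: f i)].

Definition finite_dim_sub (S : V -> Prop) : Prop := exists n, subspace_dim S n.

Definition infinite_dimensional : Prop := ~ finite_dim_sub (fun _ => True).

Definition range (T : V -> V) : V -> Prop := fun y => exists x, y = T x.

Definition is_linear_op (T : V -> V) : Prop :=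
  forall (a : R[i]) (x y : V), T (a *: x + y) = a *: T x + T y.

Definition is_bounded_op (T : V -> V) : Prop :=
  is_linear_op T /\ exists c : R, forall x, hnorm (T x) <= c * hnorm x.

Definition bounded_selfadjoint (T : V -> V) : Prop :=
  is_bounded_op T /\ forall x y, ip (T x) y = ip x (T y).

Definition finite_rank (T : V -> V) : Prop := finite_dim_sub (range T).

Definition orth_proj (P : V -> V) : Prop :=
  bounded_selfadjoint P /\ forall x, P (P x) = P x.

Definition proj_rank (P : V -> V) (k : nat) : Prop :=
  orth_proj P /\ subspace_dim (range P) k.

Definition proj_infinite_rank (P : V -> V) : Prop :=
  orth_proj P /\ ~ finite_dim_sub (range P).

Variable m : nat.

Definition compresses (A : 'I_m -> V -> V) (P : V -> V) (a : 'rV[R]_m) : Prop :=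
  forall (j : 'I_m) (x : V), P (A j (P x)) = (real_complex R (a ord0 j)) *: P x.

Definition Lambda_k (A : 'I_m -> V -> V) (k : nat) (a : 'rV[R]_m) : Prop :=
  exists P, proj_rank P k /\ compresses A P a.

Definition Lambda_inf (A : 'I_m -> V -> V) (a : 'rV[R]_m) : Prop :=
  exists P, proj_infinite_rank P /\ compresses A P a.

(* joint numerical range W(B) (the real numbers <B_j x, x> are taken via Re) *)
Definition joint_num_range (B : 'I_m -> V -> V) (a : 'rV[R]_m) : Prop :=
  exists x : V, hnorm x = 1 /\ forall j : 'I_m, a ord0 j = complex.Re (ip (B j x) x).

Definition add_tuple (A F : 'I_m -> V -> V) : 'I_m -> V -> V :=
  fun j x => A j x + F j x.

End Hilbert.

Section Star.
Variables (R : realType) (m : nat).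

Definition segment_in (S : 'rV[R]_m -> Prop) (c b : 'rV[R]_m) : Prop :=
  forall t : R, 0 <= t <= 1 -> S ((1 - t) *: c + t *: b).

Definition star_center (S : 'rV[R]_m -> Prop) (c : 'rV[R]_m) : Prop :=
  S c /\ forall b, S b -> segment_in S c b.

Definition convex_set (S : 'rV[R]_m -> Prop) : Prop :=
  forall c b, S c -> S b -> segment_in S c b.
End Star.

(* Main.v *)
Require Import Defs.
From mathcomp Require Import all_boot all_order all_algebra.
From mathcomp Require Import reals.
From mathcomp.real_closed Require Import complex.
From mathcomp Require classical_sets.
From mathcomp Require Import ring lra.
From Stdlib Require Import Classical ClassicalEpsilon.
Set Implicit Arguments.
Unset Strict Implicit.
Unset Printing Implicit Defensive.
Import Order.TTheory GRing.Theory Num.Theory.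
Local Open Scope ring_scope.
Local Open Scope complex_scope.
Import ComplexField.Normc.

Section Conj.
Variable R : realType.
Lemma conjD (a b : R[i]) : conjc (a + b) = conjc a + conjc b.
Proof. by rewrite rmorphD. Qed.
Lemma conjM (a b : R[i]) : conjc (a * b) = conjc a * conjc b.
Proof. by rewrite rmorphM. Qed.
Lemma conjN (a : R[i]) : conjc (- a) = - conjc a.
Proof. by rewrite rmorphN. Qed.
Lemma conjB (a b : R[i]) : conjc (a - b) = conjc a - conjc b.
Proof. by rewrite rmorphB. Qed.
Lemma conj_sum (I : Type) (r : seq I) (P : pred I) (F : I -> R[i]) :
  conjc (\sum_(i <- r | P i) F i) = \sum_(i <- r | P i) conjc (F i).
Proof. by apply: big_morph; [exact: conjD|exact: conjc0]. Qed.
End Conj.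

Section Basic.
Variables (R : realType) (V : lmodType R[i]) (ip : V -> V -> R[i]).
Hypothesis Hip : is_inner_product ip.

Lemma ipDl x y z : ip (x + y) z = ip x z + ip y z.
Proof. by case: Hip => H _ _; rewrite -{1}(scale1r x) H mul1r. Qed.

Lemma ip0l z : ip 0 z = 0.
Proof. by have := ipDl 0 0 z; rewrite addr0 => /eqP; rewrite -subr_eq subrr eq_sym => /eqP. Qed.

Lemma ipZl a x z : ip (a *: x) z = a * ip x z.
Proof. by case: Hip => H _ _; rewrite -[a *: x]addr0 H ip0l addr0. Qed.

Lemma ipNl x z : ip (- x) z = - ip x z.
Proof. by rewrite -scaleN1r ipZl mulN1r. Qed.

Lemma ipBl x y z : ip (x - y) z = ip x z - ip y z.
Proof. by rewrite ipDl ipNl. Qed.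

Lemma ipC x y : ip y x = conjc (ip x y).
Proof. by case: Hip. Qed.

Lemma ipDr x y z : ip z (x + y) = ip z x + ip z y.
Proof. by rewrite ipC ipDl conjD -!ipC. Qed.

Lemma ipZr a x z : ip z (a *: x) = conjc a * ip z x.
Proof. by rewrite ipC ipZl conjM -ipC. Qed.

Lemma ip0r z : ip z 0 = 0.
Proof. by rewrite ipC ip0l conjc0. Qed.

Lemma ipNr x z : ip z (- x) = - ip z x.
Proof. by rewrite ipC ipNl conjN -ipC. Qed.

Lemma ipBr x y z : ip z (x - y) = ip z x - ip z y.
Proof. by rewrite ipDr ipNr. Qed.

Lemma ip_suml (I : Type) (r : seq I) (P : pred I) (F : I -> V) z :
  ip (\sum_(i <- r | P i) F i) z = \sum_(i <- r | P i) ip (F i) z.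
Proof. by apply: (big_morph (fun x => ip x z)) => [x y|]; rewrite ?ipDl ?ip0l. Qed.

Lemma ip_sumr (I : Type) (r : seq I) (P : pred I) (F : I -> V) z :
  ip z (\sum_(i <- r | P i) F i) = \sum_(i <- r | P i) ip z (F i).
Proof. by apply: (big_morph (fun x => ip z x)) => [x y|]; rewrite ?ipDr ?ip0r. Qed.

Lemma ipxx_real x : ip x x = (complex.Re (ip x x))%:C.
Proof.
have := ipC x x; case: (ip x x) => a b /= [] Hb.
suff -> : b = 0 by [].
lra.
Qed.

Lemma ipxx_ge0 x : 0 <= complex.Re (ip x x).
Proof.
have [->|nz] := eqVneq x 0; first by rewrite ip0l.
by case: Hip => _ _ /(_ x nz) /ltW.
Qed.

Lemma ipxx_eq0 x : complex.Re (ip x x) = 0 -> x = 0.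
Proof.
move=> H; apply/eqP; apply: contraT => nz.
by case: Hip => _ _ /(_ x nz); rewrite H ltxx.
Qed.

End Basic.

Section Cplx.
Variable R : realType.
Implicit Types a b w : R[i].

Lemma mul_conjc a : a * conjc a = ((normc a) ^+ 2)%:C.
Proof.
case: a => a1 a2 /=; rewrite sqr_sqrtr ?addr_ge0 ?sqr_ge0 //.
congr (_ +i* _).
Timeout 20 ring.
Timeout 20 ring.
Qed.

Lemma normc_ge0 a : 0 <= normc a.
Proof. by case: a => a1 a2 /=; exact: sqrtr_ge0. Qed.

Lemma normc_conj a : normc (conjc a) = normc a.
Proof. by case: a => a1 a2 /=; rewrite sqrrN. Qed.

Lemma normc_real (r : R) : normc (r%:C) = `|r|.
Proof. by rewrite /= expr0n /= addr0 sqrtr_sqr. Qed.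

Lemma Re_le_normc a : `|complex.Re a| <= normc a.
Proof.
case: a => a1 a2 /=; rewrite -sqrtr_sqr ler_sqrt ?addr_ge0 ?sqr_ge0 //.
by rewrite lerDl sqr_ge0.
Qed.

Lemma Im_le_normc a : `|complex.Im a| <= normc a.
Proof.
case: a => a1 a2 /=; rewrite -sqrtr_sqr ler_sqrt ?addr_ge0 ?sqr_ge0 //.
by rewrite lerDr sqr_ge0.
Qed.

Lemma ReM_real (r s : R) : complex.Re (r%:C * s%:C) = r * s.
Proof. by rewrite /= mulr0 subr0. Qed.

Lemma normcD a b : normc (a + b) <= normc a + normc b.
Proof. exact: le_normcD. Qed.

Lemma normc_eq0 a : normc a = 0 -> a = 0.
Proof. exact: eq0_normc. Qed.

Lemma normcN' a : normc (- a) = normc a.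
Proof. exact: normcN. Qed.

Lemma normc_small a : (forall e : R, 0 < e -> normc a <= e) -> a = 0.
Proof.
move=> H; apply: normc_eq0; apply/eqP; rewrite eq_le normc_ge0 andbT.
apply/ler_addgt0Pr => e He; rewrite add0r; exact: H.
Qed.

Lemma ReD (a b : R[i]) : complex.Re (a + b) = complex.Re a + complex.Re b.
Proof. by case: a => ? ?; case: b. Qed.

Lemma Re_realM (r : R) w : complex.Re (r%:C * w) = r * complex.Re w.
Proof. by case: w => u v /=; rewrite mul0r subr0. Qed.

Lemma quad (X B Y t : R) : 0 < Y -> B = t * Y ->
  0 <= X + 2 * (- t * B) + - t * (- t * Y) -> B ^+ 2 <= X * Y.
Proof. move=> Yp -> H. have := mulr_ge0 (ltW Yp) H. move=> H2. lra. Qed.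
Lemma sq_le_aux (B s : R) : 0 <= s -> B ^+ 2 <= s ^+ 2 -> B <= s.
Proof.
move=> s0 H; case: (lerP B s) => // Hlt.
have : s * s < B * B by apply: ltr_pM.
rewrite -!expr2; lra.
Qed.
Lemma sq_le (B X Y sx sy : R) : 0 <= sx -> 0 <= sy -> sx ^+2 = X -> sy ^+ 2 = Y ->
  B ^+ 2 <= X * Y -> B <= sx * sy.
Proof. move=> ? ? <- <- H. apply: sq_le_aux; first exact: mulr_ge0. by rewrite exprMn. Qed.
Lemma tri (B sx sy s : R) : 0 <= sx -> 0 <= sy -> 0 <= s ->
  s ^+ 2 = sx ^+ 2 + 2 * B + sy ^+ 2 -> B <= sx * sy -> s <= sx + sy.
Proof. move=> h1 h2 h3 h4 h5. apply: sq_le_aux; first exact: addr_ge0. rewrite h4. lra. Qed.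

End Cplx.

Section Norms.
Variables (R : realType) (V : lmodType R[i]) (ip : V -> V -> R[i]).
Hypothesis Hip : is_inner_product ip.
Local Notation hn := (hnorm ip).

Lemma hnorm_ge0 x : 0 <= hn x.
Proof. exact: sqrtr_ge0. Qed.

Lemma hnorm_sqr x : hn x ^+ 2 = complex.Re (ip x x).
Proof. by rewrite /hnorm sqr_sqrtr // (ipxx_ge0 Hip). Qed.

Lemma hnorm0 : hn 0 = 0.
Proof. by rewrite /hnorm (ip0l Hip) sqrtr0. Qed.

Lemma hnorm_eq0 x : hn x = 0 -> x = 0.
Proof.
move=> H; apply: (ipxx_eq0 Hip); rewrite -hnorm_sqr H; exact: expr0n.
Qed.

Lemma hnormZ a x : hn (a *: x) = normc a * hn x.
Proof.
rewrite /hnorm (ipZl Hip) (ipZr Hip) mulrA mul_conjc (ipxx_real Hip x) ReM_real.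
by rewrite sqrtrM ?sqr_ge0 // sqrtr_sqr ger0_norm ?normc_ge0.
Qed.

Lemma hnormN x : hn (- x) = hn x.
Proof. by rewrite -scaleN1r hnormZ normcN normc1 mul1r. Qed.

Lemma hnormB x y : hn (x - y) = hn (y - x).
Proof. by rewrite -hnormN opprB. Qed.

Lemma Re_ipC x y : complex.Re (ip y x) = complex.Re (ip x y).
Proof. by rewrite (ipC Hip); case: (ip x y). Qed.

Lemma ip_expand x y :
  complex.Re (ip (x + y) (x + y)) =
  complex.Re (ip x x) + 2 * complex.Re (ip x y) + complex.Re (ip y y).
Proof.
rewrite (ipDl Hip) !(ipDr Hip) !ReD (Re_ipC x y).
lra.
Qed.

Lemma Re_CS x y : complex.Re (ip x y) <= hn x * hn y.
Proof.
have [->|ny] := eqVneq y 0; first by rewrite (ip0r Hip) hnorm0 mulr0.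
have Yp : 0 < complex.Re (ip y y) by case: Hip => _ _ /(_ y ny).
set B := complex.Re (ip x y); set Y := complex.Re (ip y y).
set t := B / Y.
have Bt : B = t * Y by rewrite /t divfK // gt_eqF.
have H := ipxx_ge0 Hip (x + (- t)%:C *: y).
rewrite ip_expand (ipZr Hip) (ipZl Hip) (ipZr Hip) conjc_real !Re_realM -/B -/Y in H.
apply: sq_le; [exact: hnorm_ge0|exact: hnorm_ge0|exact: hnorm_sqr|exact: hnorm_sqr|].
exact: (quad Yp Bt H).
Qed.

Lemma CS x y : normc (ip x y) <= hn x * hn y.
Proof.
have [E0|nz] := eqVneq (ip x y) 0; first by rewrite E0 normc0 mulr_ge0 ?hnorm_ge0.
set w := ip x y.
have nc : normc w != 0 by apply: contra nz => /eqP/normc_eq0/eqP.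
have nC : (normc w)%:C != 0.
  by apply: contra nc => /eqP [] ->.
pose th := conjc w / (normc w)%:C.
have E : ip (th *: x) y = (normc w)%:C.
  rewrite (ipZl Hip) /th -/w mulrAC [conjc w * w]mulrC mul_conjc.
  have -> : (normc w ^+ 2)%:C = (normc w)%:C * (normc w)%:C.
    by rewrite -rmorphM expr2.
  by rewrite mulrK // unitfE.
have Nth : normc th = 1.
  rewrite /th normcM normcV normc_conj normc_real ger0_norm ?normc_ge0 //.
  by rewrite divrr // unitfE.
have := Re_CS (th *: x) y; rewrite E hnormZ Nth mul1r /= -/w; exact.
Qed.

Lemma hnormD x y : hn (x + y) <= hn x + hn y.
Proof.
apply: (tri (B := complex.Re (ip x y))); rewrite ?hnorm_ge0 //; last exact: Re_CS.
by rewrite !hnorm_sqr ip_expand.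
Qed.

End Norms.

Lemma choice' (A B : Type) (P : A -> B -> Prop) :
  (forall a, exists b, P a b) -> exists f : A -> B, forall a, P a (f a).
Proof.
move=> H; exists (fun a => proj1_sig (constructive_indefinite_description _ (H a))).
by move=> a; exact: proj2_sig.
Qed.

Section PickOrd.
Variable T : nmodType.
Definition pick_ord n (c : 'I_n -> T) (k : nat) : T := \sum_(j < n | val j == k) c j.
Lemma pick_ordE n (c : 'I_n -> T) (j : 'I_n) : pick_ord c j = c j.
Proof. by rewrite /pick_ord (big_pred1 j) // => k; rewrite /= -(inj_eq val_inj). Qed.
End PickOrd.

Lemma dep_mx (F : fieldType) (n r : nat) (M : 'M[F]_(n, r)) :
  (r < n)%N -> exists v : 'rV_n, v != 0 /\ v *m M = 0.
Proof.
move=> rn.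
have : kermx M != 0.
  rewrite kermx_eq0 /row_free; apply/negP => /eqP E.
  by have := rank_leq_col M; rewrite E leqNgt rn.
case/eqP/row_matrixP/not_all_ex_not => i Hi.
exists (row i (kermx M)); split; first by apply/eqP => E; apply: Hi; rewrite E row0.
by rewrite -row_mul mulmx_ker row0.
Qed.

Section Lin.
Variables (R : realType) (V : lmodType R[i]) (ip : V -> V -> R[i]).
Hypothesis Hip : is_inner_product ip.
Local Notation C := R[i].
Local Notation hn := (hnorm ip).

Definition indep (s : nat) (f : nat -> V) : Prop :=
  forall c : nat -> C, \sum_(i < s) c i *: f i = 0 -> forall i, (i < s)%N -> c i = 0.

Definition spans (U : V -> Prop) (s : nat) (f : nat -> V) : Prop :=
  forall x, U x -> exists c : nat -> C, x = \sum_(i < s) c i *: f i.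

Definition subsp (U : V -> Prop) : Prop :=
  U 0 /\ forall (a : C) x y, U x -> U y -> U (a *: x + y).

Lemma subsp_sum (U : V -> Prop) (s : nat) (c : nat -> C) (f : nat -> V) :
  subsp U -> (forall i, (i < s)%N -> U (f i)) -> U (\sum_(i < s) c i *: f i).
Proof.
move=> [U0 UL] Hf; elim: s Hf => [|s IH] Hf; first by rewrite big_ord0.
rewrite big_ord_recr /= addrC; apply: UL; first exact: Hf.
by apply: IH => i ilt; apply: Hf; rewrite ltnS ltnW.
Qed.

Lemma dim_to_nat (U : V -> Prop) n : subspace_dim U n ->
  exists f : nat -> V, [/\ forall i, (i < n)%N -> U (f i), indep n f & spans U n f].
Proof.
case=> g [H1 H2 H3]; exists (pick_ord g); split.
- by move=> i ilt; have -> : i = val (Ordinal ilt) by []; rewrite pick_ordE.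
- move=> c Hc i ilt.
  have E : \sum_(j < n) c j *: g j = 0.
    by rewrite -[X in _ = X]Hc; apply: eq_bigr => j _; rewrite pick_ordE.
  exact: (H2 (fun j : 'I_n => c j) E (Ordinal ilt)).
- move=> x /H3 [c ->]; exists (pick_ord c); apply: eq_bigr => j _.
  by rewrite !pick_ordE.
Qed.

Lemma nat_to_dim (U : V -> Prop) n (f : nat -> V) :
  (forall i, (i < n)%N -> U (f i)) -> indep n f -> spans U n f -> subspace_dim U n.
Proof.
move=> H1 H2 H3; exists (fun i => f i); split.
- by move=> i; apply: H1.
- move=> c Hc i; rewrite -(pick_ordE c); apply: H2 => //.
  by rewrite -[X in _ = X]Hc; apply: eq_bigr => j _; rewrite pick_ordE.
- move=> x /H3 [c ->]; exists (fun j => c j) => //.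
Qed.

Lemma indep_le (s N : nat) (f g : nat -> V) (M : nat -> nat -> C) :
  indep s f -> (forall i, (i < s)%N -> f i = \sum_(l < N) M i l *: g l) -> (s <= N)%N.
Proof.
move=> Hi Hf; rewrite leqNgt; apply/negP => Ns.
have [v [vn vM]] := dep_mx (\matrix_(i < s, l < N) M i l) Ns.
move/negP: vn; apply; apply/eqP/rowP => i; rewrite mxE.
have := Hi (pick_ord (fun j => v ord0 j)) _ i (ltn_ord i); rewrite pick_ordE; apply.
have -> : \sum_(i < s) pick_ord (fun j => v ord0 j) i *: f i =
          \sum_(i < s) v ord0 i *: \sum_(l < N) M i l *: g l.
  by apply: eq_bigr => j _; rewrite pick_ordE Hf.
under eq_bigr do rewrite scaler_sumr.
rewrite exchange_big /=; apply: big1 => l _.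
under eq_bigr do rewrite scalerA.
rewrite -scaler_suml.
have := congr1 (fun w : 'M[C]_(1, N) => w ord0 l) vM; rewrite !mxE => E.
rewrite (_ : \sum_(i < s) _ = 0) ?scale0r //.
by rewrite -[X in _ = X]E; apply: eq_bigr => j _; rewrite mxE.
Qed.

Lemma avoid (n : nat) (f : nat -> V) (T : seq V) :
  indep n f -> (size T < n)%N ->
  exists c : nat -> C, \sum_(i < n) c i *: f i != 0 /\
     forall t, t \in T -> ip (\sum_(i < n) c i *: f i) t = 0.
Proof.
move=> Hi Ts.
have [v [vn vM]] := dep_mx (\matrix_(i < n, l < size T) ip (f i) (nth 0 T l)) Ts.
have [i vi] : exists i : 'I_n, v ord0 i != 0.
  apply: NNPP => H; move/negP: vn; apply.
  apply/eqP/rowP => i; rewrite !mxE; apply/eqP; apply: contraT => Hn.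
  by case: H; exists i.
exists (pick_ord (fun j => v ord0 j)); split.
  apply/negP => /eqP E; have := Hi _ E i (ltn_ord i); rewrite pick_ordE => E2.
  by rewrite E2 eqxx in vi.
move=> t tT; rewrite (ip_suml Hip).
have := congr1 (fun w : 'M[C]_(1, size T) => w ord0 (Ordinal (etrans (index_mem t T) tT))) vM.
rewrite !mxE /= => E; rewrite -[RHS]E; apply: eq_bigr => j _.
by rewrite (ipZl Hip) pick_ordE mxE nth_index.
Qed.

Lemma indep_ne0 n (f : nat -> V) (c : nat -> C) i :
  indep n f -> (i < n)%N -> c i != 0 -> \sum_(i < n) c i *: f i != 0.
Proof. by move=> Hi ilt ci; apply/negP => /eqP E; rewrite (Hi _ E i ilt) eqxx in ci. Qed.

Lemma grow (U : V -> Prop) : subsp U -> ~ finite_dim_sub U ->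
  forall s, exists f : nat -> V, (forall i, (i < s)%N -> U (f i)) /\ indep s f.
Proof.
move=> HU NF; elim=> [|s [f [Hf Hi]]].
  by exists (fun _ => 0); split => // c _ i.
have [x [Ux Nx]] : exists x, U x /\ ~ exists c : nat -> C, x = \sum_(i < s) c i *: f i.
  apply: NNPP => H; apply: NF; exists s; apply: (nat_to_dim Hf Hi).
  move=> x Ux; apply: NNPP => Hx; apply: H; by exists x.
pose f' := fun i => if i == s then x else f i.
exists f'; split.
  by move=> i; rewrite ltnS leq_eqVlt /f'; case: eqP => [_ _|_ /= /Hf].
move=> c; rewrite big_ord_recr /= /f' eqxx.
have -> : \sum_(i < s) c (widen_ord (leqnSn s) i) *:
            (if widen_ord (leqnSn s) i == s :> nat then x else f (widen_ord (leqnSn s) i))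
          = \sum_(i < s) c i *: f i.
  by apply: eq_bigr => i _ /=; rewrite ifF // ltn_eqF.
move=> E.
have cs : c s = 0.
  apply: NNPP => /eqP cs; apply: Nx; exists (fun i => - (c s)^-1 * c i).
  have Ex : c s *: x = - \sum_(i < s) c i *: f i.
    by apply/eqP; rewrite -addr_eq0 addrC E.
  rewrite -(scalerK cs x) Ex scalerN scaler_sumr -sumrN; apply: eq_bigr => i _.
  by rewrite scalerA mulNr scaleNr.
rewrite cs scale0r addr0 in E.
move=> i; rewrite ltnS leq_eqVlt => /orP [/eqP -> //|]; exact: Hi.
Qed.

Lemma fin_sub (U : V -> Prop) (N : nat) (g : nat -> V) : subsp U ->
  (forall x, U x -> exists c : nat -> C, x = \sum_(l < N) c l *: g l) ->
  finite_dim_sub U.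
Proof.
move=> HU Hg; apply: NNPP => NF.
have [f [Hf Hi]] := grow HU NF N.+1.
have M : forall i, exists c : nat -> C, (i < N.+1)%N -> f i = \sum_(l < N) c l *: g l.
  move=> i; case: (ltnP i N.+1) => ilt; last by exists (fun _ => 0).
  by have [c Hc] := Hg _ (Hf i ilt); exists c.
have [Mf HM] := choice' M.
by have := indep_le Hi (M := Mf) (fun i ilt => HM i ilt); rewrite ltnn.
Qed.

End Lin.


Lemma sum_deltaR (K : pzRingType) n (F : nat -> K) j : (j < n)%N ->
  \sum_(i < n) F i * ((i : nat) == j)%:R = F j.
Proof.
move=> jl; rewrite (bigD1 (Ordinal jl)) //= eqxx mulr1 big1 ?addr0 // => i ni.
by rewrite (_ : (i : nat) == j = false) ?mulr0 //; apply/negP => /eqP E; case/eqP: ni; apply: val_inj.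
Qed.

Lemma sum_deltaL (K : pzRingType) n (F : nat -> K) j : (j < n)%N ->
  \sum_(i < n) F i * (j == (i : nat))%:R = F j.
Proof. by move=> jl; rewrite -(sum_deltaR F jl); apply: eq_bigr => i _; rewrite eq_sym. Qed.

Section ON.
Variables (R : realType) (V : lmodType R[i]) (ip : V -> V -> R[i]).
Hypothesis Hip : is_inner_product ip.
Local Notation C := R[i].
Local Notation hn := (hnorm ip).

Definition ON n (e : nat -> V) : Prop :=
  forall i j, (i < n)%N -> (j < n)%N -> ip (e i) (e j) = ((i == j)%:R : C).

Definition projON n (e : nat -> V) (x : V) : V := \sum_(i < n) ip x (e i) *: e i.

Lemma hnorm_sum (I : Type) (r : seq I) (P : pred I) (F : I -> V) :
  hn (\sum_(i <- r | P i) F i) <= \sum_(i <- r | P i) hn (F i).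
Proof.
apply: (big_ind2 (fun x y => hn x <= y)); first by rewrite hnorm0.
  by move=> x1 y1 x2 y2 h1 h2; exact: le_trans (hnormD Hip x1 x2) (lerD h1 h2).
by [].
Qed.

Lemma hnorm_unit x : ip x x = 1 -> hn x = 1.
Proof. by move=> h; rewrite /hnorm h /= sqrtr1. Qed.

Lemma ON_unit n e i : ON n e -> (i < n)%N -> ip (e i) (e i) = 1.
Proof. by move=> He il; rewrite He // eqxx. Qed.

Lemma ip_comb_e n e (c : nat -> C) j : ON n e -> (j < n)%N ->
  ip (\sum_(i < n) c i *: e i) (e j) = c j.
Proof.
move=> He jl; rewrite (ip_suml Hip) -(sum_deltaR c jl); apply: eq_bigr => i _.
by rewrite (ipZl Hip) He.
Qed.

Lemma ON_indep n e : ON n e -> indep n e.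
Proof. by move=> He c Hc j jl; rewrite -(ip_comb_e c He jl) Hc (ip0l Hip). Qed.

Lemma ip_projON_e n e x j : ON n e -> (j < n)%N -> ip (projON n e x) (e j) = ip x (e j).
Proof. by move=> He jl; rewrite /projON (ip_comb_e (fun i => ip x (e i)) He jl). Qed.

Lemma projON_sa n e x y : ip (projON n e x) y = ip x (projON n e y).
Proof.
rewrite (ip_suml Hip) (ip_sumr Hip); apply: eq_bigr => i _.
by rewrite (ipZl Hip) (ipZr Hip) -(ipC Hip) mulrC.
Qed.

Lemma projON_lin n e : is_linear_op (projON n e).
Proof.
move=> a x y; rewrite /projON scaler_sumr -big_split /=; apply: eq_bigr => i _.
by rewrite (ipDl Hip) (ipZl Hip) scalerDl scalerA.
Qed.

Lemma projON_comb n e (c : nat -> C) : ON n e ->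
  projON n e (\sum_(i < n) c i *: e i) = \sum_(i < n) c i *: e i.
Proof. by move=> He; apply: eq_bigr => i _; rewrite (ip_comb_e c He (ltn_ord i)). Qed.

Lemma projON_idem n e x : ON n e -> projON n e (projON n e x) = projON n e x.
Proof. by move=> He; exact: (projON_comb (fun i => ip x (e i)) He). Qed.

Lemma projON_e n e j : ON n e -> (j < n)%N -> projON n e (e j) = e j.
Proof.
move=> He jl; rewrite /projON.
have -> : \sum_(i < n) ip (e j) (e i) *: e i = \sum_(i < n) (j == (i:nat))%:R *: e i.
  by apply: eq_bigr => i _; rewrite He.
rewrite (bigD1 (Ordinal jl)) //= eqxx scale1r big1 ?addr0 // => i ni.
rewrite (_ : j == (i : nat) = false) ?scale0r //.
by apply/negP => /eqP E; case/eqP: ni; apply: val_inj.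
Qed.

Lemma projON_bounded n e x : ON n e -> hn (projON n e x) <= n%:R * hn x.
Proof.
move=> He; apply: le_trans; first exact: hnorm_sum.
have -> : n%:R * hn x = \sum_(i < n) hn x by rewrite sumr_const card_ord mulr_natl.
apply: ler_sum => i _.
rewrite hnormZ // (hnorm_unit (ON_unit He (ltn_ord i))) mulr1.
apply: le_trans; first exact: (CS Hip). rewrite (hnorm_unit (ON_unit He (ltn_ord i))).
by rewrite mulr1.
Qed.

Lemma projON_orth n e : ON n e -> orth_proj ip (projON n e).
Proof.
move=> He; split; last by move=> x; exact: projON_idem.
split; last exact: projON_sa.
split; first exact: projON_lin.
by exists n%:R => x; exact: projON_bounded.
Qed.

Lemma projON_rank n e : ON n e -> proj_rank ip (projON n e) n.
Proof.
move=> He; split; first exact: projON_orth.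
apply: (@nat_to_dim _ _ _ _ e).
- by move=> i il; exists (e i); rewrite projON_e.
- exact: ON_indep.
- by move=> y [x ->]; exists (fun i => ip x (e i)).
Qed.

Lemma normalize u0 : u0 != 0 -> exists u, ip u u = 1 /\
  exists r : C, u = r *: u0.
Proof.
move=> nz; set h := hn u0.
have hp : h != 0 by apply: contra nz => /eqP /(hnorm_eq0 Hip) ->.
exists ((h^-1)%:C *: u0); split; last by exists (h^-1)%:C.
rewrite (ipZl Hip) (ipZr Hip) conjc_real (ipxx_real Hip) -hnorm_sqr //.
rewrite -/h -!rmorphM /=; congr (_ +i* _); field; exact: hp.
Qed.

Lemma ON_in (U : V -> Prop) n (f : nat -> V) (T : seq V) k : subsp U ->
  (forall i, (i < n)%N -> U (f i)) -> indep n f -> (size T + k <= n)%N ->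
  exists e : nat -> V, [/\ ON k e, (forall i, (i < k)%N -> U (e i)) &
     (forall i t, (i < k)%N -> t \in T -> ip (e i) t = 0)].
Proof.
move=> HU Hf Hi; elim: k => [|k IH] Hk.
  by exists (fun _ => 0); split.
have Hk' : (size T + k < n)%N by rewrite addnS in Hk.
have [e [He HeU HeT]] := IH (ltnW Hk').
pose T' := T ++ [seq e i | i <- iota 0 k].
have sT' : (size T' < n)%N by rewrite size_cat size_map size_iota.
have [c [nz Hc]] := avoid Hip Hi sT'.
have [u [uu [r ur]]] := normalize nz.
have Uu : U u.
  have Hs := subsp_sum c HU Hf.
  rewrite ur -[_ *: _]addr0; case: HU => U0 UL; exact: UL.
have uT : forall t, t \in T' -> ip u t = 0.
  by move=> t tT; rewrite ur (ipZl Hip) Hc // mulr0.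
pose e' := fun i => if i == k then u else e i.
exists e'; split.
- move=> i j Hi' Hj'.
  have inT : forall l, (l < k)%N -> e l \in T'.
    by move=> l ll; rewrite mem_cat; apply/orP; right; apply/mapP; exists l => //; rewrite mem_iota.
  have lt2 : forall l, (l < k.+1)%N -> l != k -> (l < k)%N.
    by move=> l; rewrite ltnS leq_eqVlt => /orP [/eqP ->|//]; rewrite eqxx.
  rewrite /e'; case: (eqVneq i k) => [Eik|ik]; case: (eqVneq j k) => [Ejk|jk].
  + by rewrite Eik Ejk eqxx uu.
  + by rewrite Eik eq_sym (negbTE jk) uT // inT // lt2.
  + by rewrite Ejk (negbTE ik) (ipC Hip) uT ?conjc0 // inT // lt2.
  + exact: He (lt2 _ Hi' ik) (lt2 _ Hj' jk).
- move=> i; rewrite ltnS leq_eqVlt /e'; case: eqP => [_ _|_ /= il] //.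
  exact: HeU.
- move=> i t; rewrite ltnS leq_eqVlt /e'; case: eqP => [_ _ tT|_ /= il tT].
    by apply: uT; rewrite mem_cat tT.
  exact: HeT.
Qed.

End ON.

Section LinOp.
Variables (R : realType) (V : lmodType R[i]).
Variable T : V -> V.
Hypothesis HT : is_linear_op T.

Lemma lin0 : T 0 = 0.
Proof.
have := HT 1 0 0; rewrite scaler0 addr0 scale1r -{1}[T 0]addr0 => /addrI H.
exact: esym H.
Qed.

Lemma linD x y : T (x + y) = T x + T y.
Proof. by rewrite -{1}(scale1r x) HT scale1r. Qed.

Lemma linZ a x : T (a *: x) = a *: T x.
Proof. by rewrite -[a *: x]addr0 HT lin0 addr0. Qed.

Lemma linN x : T (- x) = - T x.
Proof. by rewrite -scaleN1r linZ scaleN1r. Qed.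

Lemma linB x y : T (x - y) = T x - T y.
Proof. by rewrite linD linN. Qed.

Lemma lin_sum (I : Type) (r : seq I) (P : pred I) (F : I -> V) :
  T (\sum_(i <- r | P i) F i) = \sum_(i <- r | P i) T (F i).
Proof. by apply: (big_morph T) => [x y|]; rewrite ?linD ?lin0. Qed.

End LinOp.

Section GSsec.
Variables (R : realType) (V : lmodType R[i]) (ip : V -> V -> R[i]).
Hypothesis Hip : is_inner_product ip.
Local Notation C := R[i].
Local Notation hn := (hnorm ip).

Lemma projON_recr n e x :
  projON ip n.+1 e x = projON ip n e x + ip x (e n) *: e n.
Proof. by rewrite /projON big_ord_recr. Qed.

Lemma projON_ext n e e' x : (forall i, (i < n)%N -> e i = e' i) ->
  projON ip n e x = projON ip n e' x.
Proof. by move=> H; apply: eq_bigr => i _; rewrite H. Qed.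

Lemma ON_ext n e e' : (forall i, (i < n)%N -> e i = e' i) -> ON ip n e -> ON ip n e'.
Proof. by move=> H He i j il jl; rewrite -!H //; apply: He. Qed.

Lemma projON_orth_e n e x j : ON ip n e -> (j < n)%N ->
  ip (x - projON ip n e x) (e j) = 0.
Proof. by move=> He jl; rewrite (ipBl Hip) (ip_projON_e Hip) // subrr. Qed.

Lemma GS (T : seq V) : exists n (e : nat -> V),
  ON ip n e /\ forall t, t \in T -> projON ip n e t = t.
Proof.
elim: T => [|t T [n [e [He HT]]]].
  by exists 0%N, (fun _ => 0); split => // i j.
set r := t - projON ip n e t.
have [r0|rn] := eqVneq r 0.
  exists n, e; split => // s; rewrite in_cons => /orP [/eqP ->|/HT //].
  by apply/eqP; rewrite eq_sym -subr_eq0 -/r r0.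
set h := hn r.
have hp : h != 0 by apply: contra rn => /eqP /(hnorm_eq0 Hip) ->.
pose rho := h^-1.
pose u := rho%:C *: r.
have rhoh : rho * rho * complex.Re (ip r r) = 1.
  by rewrite -(hnorm_sqr Hip) -/h /rho; field.
have uu : ip u u = 1.
  rewrite /u (ipZl Hip) (ipZr Hip) conjc_real (ipxx_real Hip r) -!rmorphM /=.
  by rewrite mulrA rhoh.
have er : forall i, (i < n)%N -> ip (e i) r = 0.
  move=> i il; rewrite (ipC Hip) projON_orth_e // conjc0 //.
have eu : forall i, (i < n)%N -> ip (e i) u = 0.
  by move=> i il; rewrite /u (ipZr Hip) er // mulr0.
have ue : forall i, (i < n)%N -> ip u (e i) = 0.
  by move=> i il; rewrite (ipC Hip) eu // conjc0.
pose e' := fun i => if i == n then u else e i.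
have ee' : forall i, (i < n)%N -> e i = e' i.
  by move=> i il; rewrite /e' ifF // ltn_eqF.
have Pu : projON ip n e u = 0.
  by apply: big1 => i _; rewrite ue // scale0r.
exists n.+1, e'; split.
  move=> i j il jl.
  have lt2 : forall l, (l < n.+1)%N -> l != n -> (l < n)%N.
    by move=> l; rewrite ltnS leq_eqVlt => /orP [/eqP ->|//]; rewrite eqxx.
  rewrite /e'; case: (eqVneq i n) => [Ein|ik]; case: (eqVneq j n) => [Ejn|jk].
  + by rewrite Ein Ejn eqxx uu.
  + by rewrite Ein eq_sym (negbTE jk) ue // lt2.
  + by rewrite Ejn (negbTE ik) eu // lt2.
  + exact: He (lt2 _ il ik) (lt2 _ jl jk).
move=> s; rewrite projON_recr -(projON_ext _ ee') /e' eqxx.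
rewrite in_cons => /orP [/eqP ->|sT].
  have Pr : projON ip n e r = 0.
    by rewrite /r (linB (projON_lin Hip n e)) (projON_idem Hip) // subrr.
  have itr : ip t r = ip r r.
    rewrite -{1}(subrK (projON ip n e t) t) -/r (ipDl Hip) (projON_sa Hip) Pr.
    by rewrite (ip0r Hip) addr0.
  rewrite /u (ipZr Hip) conjc_real itr (ipxx_real Hip r) scalerA -!rmorphM /=.
  by rewrite [rho * _ * _]mulrC mulrA rhoh scale1r /r addrC subrK.
have su : ip s u = 0 by rewrite -(HT _ sT) (projON_sa Hip) Pu (ip0r Hip).
by rewrite su scale0r addr0 HT.
Qed.

Lemma Lk_of_ON m (A : 'I_m -> V -> V) (HAl : forall j, is_linear_op (A j))
  k e (a : 'rV[R]_m) : ON ip k e ->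
  (forall j i l, (i < k)%N -> (l < k)%N ->
      ip (A j (e i)) (e l) = (a ord0 j)%:C * (i == l)%:R) ->
  Lambda_k ip A k a.
Proof.
move=> He Ha; exists (projON ip k e); split; first exact: projON_rank.
move=> j x; rewrite [X in A j X]/projON (lin_sum (HAl j)) /projON scaler_sumr.
apply: eq_bigr => l _; rewrite scalerA; congr (_ *: _).
rewrite (ip_suml Hip) mulrC -(sum_deltaR (fun i => ip x (e i) * (a ord0 j)%:C) (ltn_ord l)).
apply: eq_bigr => i _; rewrite (linZ (HAl j)) (ipZl Hip) Ha //.
by rewrite mulrA.
Qed.

End GSsec.

Section Comb.
Variables (R : realType) (V : lmodType R[i]) (ip : V -> V -> R[i]).
Hypothesis Hip : is_inner_product ip.
Local Notation C := R[i].
Local Notation hn := (hnorm ip).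

Implicit Types f g h : V -> V.

Lemma lin_add f g : is_linear_op f -> is_linear_op g -> is_linear_op (fun x => f x + g x).
Proof. by move=> Hf Hg a x y; rewrite Hf Hg scalerDr addrACA. Qed.
Lemma lin_opp f : is_linear_op f -> is_linear_op (fun x => - f x).
Proof. by move=> Hf a x y; rewrite Hf opprD scalerN. Qed.
Lemma lin_comp f g : is_linear_op f -> is_linear_op g -> is_linear_op (fun x => f (g x)).
Proof. by move=> Hf Hg a x y; rewrite Hg Hf. Qed.
Lemma lin_scale f (w : C) : is_linear_op f -> is_linear_op (fun x => w *: f x).
Proof. by move=> Hf a x y; rewrite Hf scalerDr !scalerA mulrC. Qed.

Definition bnd f := exists c : R, forall x, hn (f x) <= c * hn x.

Lemma bnd_pos f : bnd f -> exists c : R, 0 <= c /\ forall x, hn (f x) <= c * hn x.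
Proof.
case=> c Hc; exists `|c|; split => // x; apply: le_trans (Hc x) _.
by apply: ler_wpM2r; [exact: hnorm_ge0|exact: ler_norm].
Qed.

Lemma bnd_add f g : bnd f -> bnd g -> bnd (fun x => f x + g x).
Proof.
move=> [c1 H1] [c2 H2]; exists (c1 + c2) => x; rewrite mulrDl.
exact: le_trans (hnormD Hip _ _) (lerD (H1 x) (H2 x)).
Qed.
Lemma bnd_opp f : bnd f -> bnd (fun x => - f x).
Proof. by move=> [c H]; exists c => x; rewrite hnormN. Qed.
Lemma bnd_comp f g : bnd f -> bnd g -> bnd (fun x => f (g x)).
Proof.
move=> /bnd_pos [c1 [c1p H1]] [c2 H2]; exists (c1 * c2) => x.
by apply: le_trans (H1 _) _; rewrite -mulrA; apply: ler_wpM2l.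
Qed.
Lemma bnd_scale f (w : C) : bnd f -> bnd (fun x => w *: f x).
Proof.
move=> /bnd_pos [c [cp H]]; exists (normc w * c) => x.
rewrite hnormZ // -mulrA; apply: ler_wpM2l; [exact: normc_ge0|exact: H].
Qed.

Definition sa f := forall x y, ip (f x) y = ip x (f y).

Lemma sa_add f g : sa f -> sa g -> sa (fun x => f x + g x).
Proof. by move=> Hf Hg x y; rewrite (ipDl Hip) (ipDr Hip) Hf Hg. Qed.
Lemma sa_opp f : sa f -> sa (fun x => - f x).
Proof. by move=> Hf x y; rewrite (ipNl Hip) (ipNr Hip) Hf. Qed.
Lemma sa_scale f (w : R) : sa f -> sa (fun x => w%:C *: f x).
Proof. by move=> Hf x y; rewrite (ipZl Hip) (ipZr Hip) conjc_real Hf. Qed.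
Lemma sa_pair f g : sa f -> sa g -> sa (fun x => f (g x) + g (f x)).
Proof.
move=> Hf Hg x y; rewrite (ipDl Hip) (ipDr Hip) Hf Hg Hg Hf addrC //.
Qed.
Lemma sa_sand f g : sa f -> sa g -> sa (fun x => f (g (f x))).
Proof. by move=> Hf Hg x y; rewrite Hf Hg Hf. Qed.

Definition frk f := exists N (g : nat -> V),
  forall x, exists c : nat -> C, f x = \sum_(l < N) c l *: g l.

Lemma frk_add f g : frk f -> frk g -> frk (fun x => f x + g x).
Proof.
move=> [N1 [g1 H1]] [N2 [g2 H2]].
exists (N1 + N2)%N, (fun l => if (l < N1)%N then g1 l else g2 (l - N1)%N) => x.
have [c1 E1] := H1 x; have [c2 E2] := H2 x.
exists (fun l => if (l < N1)%N then c1 l else c2 (l - N1)%N).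
rewrite big_split_ord /= E1 E2; congr (_ + _); apply: eq_bigr => i _ /=.
  by rewrite ltn_ord.
by rewrite ltnNge leq_addr /= addKn.
Qed.
Lemma frk_opp f : frk f -> frk (fun x => - f x).
Proof.
move=> [N [g H]]; exists N, g => x; have [c E] := H x.
by exists (fun l => - c l); rewrite E -sumrN; apply: eq_bigr => i _; rewrite scaleNr.
Qed.
Lemma frk_scale f (w : C) : frk f -> frk (fun x => w *: f x).
Proof.
move=> [N [g H]]; exists N, g => x; have [c E] := H x.
by exists (fun l => w * c l); rewrite E scaler_sumr; apply: eq_bigr => i _; rewrite scalerA.
Qed.
Lemma frk_pre f h : frk f -> frk (fun x => f (h x)).
Proof. by move=> [N [g H]]; exists N, g => x; exact: H. Qed.
Lemma frk_post f h : is_linear_op h -> frk f -> frk (fun x => h (f x)).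
Proof.
move=> Hh [N [g H]]; exists N, (fun l => h (g l)) => x; have [c E] := H x.
exists c; rewrite E (lin_sum Hh); apply: eq_bigr => i _; exact: linZ.
Qed.

Lemma frk_projON n e : frk (projON ip n e).
Proof. by exists n, e => x; exists (fun i => ip x (e i)). Qed.

Lemma range_subsp f : is_linear_op f -> subsp (range f).
Proof.
move=> Hf; split; first by exists 0; rewrite (lin0 Hf).
by move=> a _ _ [x ->] [y ->]; exists (a *: x + y); rewrite Hf.
Qed.

Lemma frk_finite f : is_linear_op f -> frk f -> finite_rank f.
Proof.
move=> Hf [N [g H]]; apply: (fin_sub (N := N) (g := g)); first exact: range_subsp.
by move=> _ [x ->]; exact: H.
Qed.

End Comb.

Section Step.
Variables (R : realType) (V : lmodType R[i]) (ip : V -> V -> R[i]).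
Hypothesis Hip : is_inner_product ip.
Local Notation C := R[i].
Local Notation hn := (hnorm ip).
Variables (m : nat) (A : 'I_m -> V -> V).
Hypothesis HA : forall j, bounded_selfadjoint ip (A j).

Lemma HAl j : is_linear_op (A j). Proof. by case: (HA j) => [[]]. Qed.
Lemma HAb j : bnd ip (A j). Proof. by case: (HA j) => [[_]]. Qed.
Lemma HAs j : sa ip (A j). Proof. by case: (HA j). Qed.

Lemma ipxx1 x : hn x = 1 -> ip x x = 1.
Proof. by move=> h; rewrite (ipxx_real Hip) -(hnorm_sqr Hip) h expr1n. Qed.

Lemma unit_orth (Hinf : infinite_dimensional V) (T : seq V) :
  exists y, ip y y = 1 /\ forall t, t \in T -> ip y t = 0.
Proof.
have subT : subsp (fun _ : V => True) by split.
have [f [_ Hf]] := grow subT Hinf (size T).+1.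
have [e1 [He1 _ He1T]] := ON_in Hip (k := 1) subT (fun i _ => I) Hf (eq_leq (addn1 (size T))).
exists (e1 0%N); split; first exact: (ON_unit He1 (ltn0Sn 0)).

by move=> t tT; apply: He1T.
Qed.

Lemma step (Hinf : infinite_dimensional V) (a : 'rV[R]_m)
  (Hw : forall F : 'I_m -> V -> V,
     (forall j, bounded_selfadjoint ip (F j) /\ finite_rank (F j)) ->
     joint_num_range ip (add_tuple A F) a)
  (T : seq V) :
  exists u, [/\ ip u u = 1, forall t, t \in T -> ip u t = 0 &
            forall j, complex.Re (ip (A j u) u) = a ord0 j].
Proof.
have [y1 [y1y1 y1T]] := unit_orth Hinf T.
pose T1 := T ++ y1 :: [seq A j y1 | j <- enum 'I_m].
have [n [e [He HT1]]] := GS Hip T1.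
pose P := projON ip n e.
pose w j := complex.Re (ip (A j y1) y1).
pose F := fun j x => - (P (A j x) + A j (P x)) + P (A j (P x)) + (w j)%:C *: P x.
have HPl : is_linear_op P := projON_lin Hip n e.
have HPb : bnd ip P by exists n%:R => x; exact: projON_bounded.
have HPs : sa ip P by move=> x y; exact: (projON_sa Hip n e x y).
have HF : forall j, bounded_selfadjoint ip (F j) /\ finite_rank (F j).
  move=> j.
  have Hl : is_linear_op (F j) :=
    lin_add (lin_add (lin_opp (lin_add (lin_comp HPl (HAl j)) (lin_comp (HAl j) HPl)))
       (lin_comp HPl (lin_comp (HAl j) HPl))) (lin_scale (w j)%:C HPl).
  have Hb : bnd ip (F j) :=
    bnd_add Hip (bnd_add Hip (bnd_opp Hip (bnd_add Hip (bnd_comp HPb (HAb j)) (bnd_comp (HAb j) HPb)))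
       (bnd_comp HPb (bnd_comp (HAb j) HPb))) (bnd_scale Hip (w j)%:C HPb).
  have Hs : sa ip (F j) :=
    sa_add Hip (sa_add Hip (sa_opp Hip (sa_pair Hip HPs (HAs j))) (sa_sand HPs (HAs j)))
       (sa_scale Hip (w j) HPs).
  have Hr : frk (F j) :=
    frk_add (frk_add (frk_opp (frk_add (frk_pre (A j) (frk_projON ip n e))
                                      (frk_post (HAl j) (frk_projON ip n e))))
                     (frk_pre (fun x => A j (P x)) (frk_projON ip n e)))
            (frk_scale (w j)%:C (frk_projON ip n e)).
  split; first by split; first split.
  exact: frk_finite.
have [x [hx Hx]] := Hw F HF.
have [y [z [xyz Py Pz zPx]]] : exists y z, [/\ x = y + z, P y = 0, P z = z & P x = z].
  exists (x - P x), (P x); split => //.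
  - by rewrite subrK.
  - by rewrite (linB HPl) /P (projON_idem Hip) // subrr.
  - by rewrite /P (projON_idem Hip).
have yT1 : forall t, t \in T1 -> ip y t = 0.
  by move=> t tT; rewrite -(HT1 t tT) -HPs Py (ip0l Hip).
have zy : ip z y = 0 by rewrite -zPx HPs Py (ip0r Hip).
have yz : ip y z = 0 by rewrite (ipC Hip) zy conjc0.
have ipPv : forall v, ip (P v) x = ip v z by move=> v; rewrite HPs zPx.
have y1T1 : y1 \in T1 by rewrite mem_cat in_cons eqxx orbT.
have Ay1T1 : forall j, A j y1 \in T1.
  by move=> j; rewrite mem_cat in_cons; apply/orP; right; apply/orP; right;
     apply: map_f; rewrite mem_enum.
have Ex : forall j, complex.Re (ip (add_tuple A F j x) x) =
    complex.Re (ip (A j y) y) + w j * complex.Re (ip z z).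
  move=> j; rewrite /add_tuple /F zPx !(ipDl Hip) !(ipNl Hip) (ipZl Hip) (ipDl Hip) !ipPv.
  rewrite xyz !(linD (HAl j)) !(ipDl Hip) !(ipDr Hip) zy.
  rewrite -Re_realM -ReD; congr complex.Re; ring.
pose s := hn z.
pose u := y + s%:C *: y1.
have ss : ip z z = (s * s)%:C by rewrite (ipxx_real Hip) -(hnorm_sqr Hip) expr2.
have yy1 : ip y y1 = 0 by apply: yT1.
have y1y : ip y1 y = 0 by rewrite (ipC Hip) yy1 conjc0.
exists u; split.
- rewrite /u !(ipDl Hip) !(ipDr Hip) !(ipZl Hip) !(ipZr Hip) yy1 y1y y1y1 conjc_real.
  have E1 := ipxx1 hx; rewrite xyz !(ipDl Hip) !(ipDr Hip) yz zy ss in E1.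
  rewrite -[RHS]E1 rmorphM; ring.
- move=> t tT; rewrite /u (ipDl Hip) (ipZl Hip) y1T // yT1 ?mulr0 ?addr0 //.
  by rewrite mem_cat tT.
- move=> j; rewrite [RHS](Hx j) Ex.
  have h1 : ip (A j y) y1 = 0 by rewrite HAs yT1.
  have h2 : ip (A j y1) y = 0 by rewrite HAs (ipC Hip) h1 conjc0.
  rewrite /u (linD (HAl j)) (linZ (HAl j)) !(ipDl Hip) !(ipDr Hip) !(ipZl Hip).
  rewrite !(ipZr Hip) h1 h2 conjc_real !mulr0 !addr0 add0r.
  rewrite ReD mulrA -rmorphM Re_realM ss /= /w; ring.
Qed.

End Step.

Lemma mono_le (R : realType) (u : nat -> R) : (forall n, u n <= u n.+1) ->
  forall p q, (q <= p)%N -> u q <= u p.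
Proof.
move=> Hu p q; elim: p => [|p IH]; first by rewrite leqn0 => /eqP ->.
rewrite leq_eqVlt => /orP [/eqP -> //|]; rewrite ltnS => /IH h.
exact: le_trans h (Hu p).
Qed.

Lemma mono_cauchy (R : realType) (u : nat -> R) (B : R) :
  (forall n, u n <= u n.+1) -> (forall n, u n <= B) ->
  forall e, 0 < e -> exists N, forall p q, (N <= q)%N -> (q <= p)%N -> u p - u q < e.
Proof.
move=> Hu HB e ep.
pose E := fun r : R => exists n, r = u n.
have hs : classical_sets.has_sup E.
  split; first by exists (u 0%N); exists 0%N.
  by exists B => y [n ->].
have [r [N ->] Hr] := sup_adherent ep hs.
exists N => p q Nq qp.
have h1 : u p <= sup E by apply: (sup_upper_bound hs); exists p.
have h2 : u N <= u q := mono_le Hu Nq.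
lra.
Qed.

Lemma Re_sum (R : realType) (I : Type) (r : seq I) (P : pred I) (F : I -> R[i]) :
  complex.Re (\sum_(i <- r | P i) F i) = \sum_(i <- r | P i) complex.Re (F i).
Proof. by apply: big_morph => [x y|]; [exact: ReD|]. Qed.

Section Lim.
Variables (R : realType) (V : lmodType R[i]) (ip : V -> V -> R[i]).
Hypothesis Hip : is_inner_product ip.
Local Notation C := R[i].
Local Notation hn := (hnorm ip).

Definition lim_to (u : nat -> V) (l : V) : Prop :=
  forall e : R, 0 < e -> exists N, forall p, (N <= p)%N -> hn (u p - l) < e.

Lemma small_R (r : R) : 0 <= r -> (forall e, 0 < e -> r < e) -> r = 0.
Proof.
move=> r0 H; apply/eqP; rewrite eq_le r0 andbT.
by apply/ler_addgt0Pr => e ep; rewrite add0r ltW // H.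
Qed.

Lemma lim_unique u l1 l2 : lim_to u l1 -> lim_to u l2 -> l1 = l2.
Proof.
move=> H1 H2; apply/eqP; rewrite -subr_eq0; apply/eqP; apply: (hnorm_eq0 Hip).
apply: small_R; first exact: hnorm_ge0.
move=> e ep; have e2 : 0 < e / 2 by rewrite divr_gt0.
have [N1 h1] := H1 _ e2; have [N2 h2] := H2 _ e2.
have a1 := h1 (maxn N1 N2) (leq_maxl _ _); have a2 := h2 (maxn N1 N2) (leq_maxr _ _).
rewrite (hnormB Hip) in a1.
have := hnormD Hip (l1 - u (maxn N1 N2)) (u (maxn N1 N2) - l2).
rewrite addrA subrK => h; lra.
Qed.

Lemma lim_add u v l l' : lim_to u l -> lim_to v l' -> lim_to (fun p => u p + v p) (l + l').
Proof.
move=> H1 H2 e ep; have e2 : 0 < e / 2 by rewrite divr_gt0.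
have [N1 h1] := H1 _ e2; have [N2 h2] := H2 _ e2.
exists (maxn N1 N2) => p Np.
have a1 := h1 p (leq_trans (leq_maxl _ _) Np); have a2 := h2 p (leq_trans (leq_maxr _ _) Np).
have := hnormD Hip (u p - l) (v p - l').
rewrite (_ : u p - l + (v p - l') = u p + v p - (l + l')); last first.
  by rewrite opprD addrACA.
move=> h; lra.
Qed.

Lemma lim_scale u l (a : C) : lim_to u l -> lim_to (fun p => a *: u p) (a *: l).
Proof.
move=> H e ep; have na := normc_ge0 a.
have d : 0 < e / (normc a + 1) by rewrite divr_gt0 // ltr_wpDl.
have [N h] := H _ d; exists N => p Np; rewrite -scalerBr (hnormZ Hip).
have hp := h p Np; have g := hnorm_ge0 ip (u p - l).
have E : e = (normc a + 1) * (e / (normc a + 1)).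
  by rewrite mulrC divfK // gt_eqF // ltr_wpDl.
rewrite E; set dd := e / (normc a + 1) in hp *.
nra.
Qed.

Lemma lim_ev_const u l N : (forall p, (N <= p)%N -> u p = l) -> lim_to u l.
Proof. by move=> H e ep; exists N => p Np; rewrite H // subrr (hnorm0 Hip). Qed.

Lemma lim_ext u v l : (forall p, u p = v p) -> lim_to u l -> lim_to v l.
Proof. by move=> E H e ep; have [N h] := H e ep; exists N => p Np; rewrite -E; apply: h. Qed.

Lemma normc_small2 (w : C) (K : R) : 0 <= K ->
  (forall d, 0 < d -> normc w <= d * K) -> w = 0.
Proof.
move=> K0 H; apply: normc_small => e ep.
have d : 0 < e / (K + 1) by rewrite divr_gt0 // ltr_wpDl.
apply: le_trans (H _ d) _.
rewrite mulrAC ler_pdivrMr ?ltr_wpDl //; apply: ler_wpM2l; [exact: ltW|].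
by rewrite lerDl.
Qed.

Lemma lim_ip_const u l y w N : lim_to u l -> (forall p, (N <= p)%N -> ip (u p) y = w) ->
  ip l y = w.
Proof.
move=> H Hc; apply/eqP; rewrite -subr_eq0; apply/eqP.
apply: (normc_small2 (K := hn y)); first exact: hnorm_ge0.
move=> d dp; have [N' h] := H d dp.
pose p := maxn N N'.
rewrite -(Hc p (leq_maxl _ _)) -(ipBl Hip) -normcN -(ipNl Hip) opprB.
apply: le_trans (CS Hip _ _) _; apply: ler_wpM2r; first exact: hnorm_ge0.
exact: ltW (h p (leq_maxr _ _)).
Qed.

End Lim.

Section Qsec.
Variables (R : realType) (V : lmodType R[i]) (ip : V -> V -> R[i]).
Hypothesis Hip : is_inner_product ip.
Hypothesis Hc : complete_ip ip.
Local Notation C := R[i].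
Local Notation hn := (hnorm ip).
Variable e : nat -> V.
Hypothesis He : forall i j, ip (e i) (e j) = ((i == j)%:R : C).

Lemma ONall p : ON ip p e.
Proof. by move=> i j _ _; exact: He. Qed.

Local Notation S p x := (projON ip p e x).

Lemma ip_seq_e (r : seq nat) (d : nat -> C) l : uniq r -> l \in r ->
  ip (\sum_(i <- r) d i *: e i) (e l) = d l.
Proof.
move=> ur lr; rewrite (ip_suml Hip) (big_rem l) //= (ipZl Hip) He eqxx mulr1.
rewrite big_seq big1 ?addr0 // => i; rewrite mem_rem_uniq // => /andP [il _].
by rewrite (ipZl Hip) He (negbTE il) mulr0.
Qed.

Lemma ip_seq_self (r : seq nat) (d : nat -> C) : uniq r ->
  complex.Re (ip (\sum_(i <- r) d i *: e i) (\sum_(i <- r) d i *: e i)) =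
  \sum_(i <- r) normc (d i) ^+ 2.
Proof.
move=> ur; rewrite (ip_sumr Hip) Re_sum big_seq [RHS]big_seq; apply: eq_bigr => i ir.
by rewrite (ipZr Hip) ip_seq_e // mulrC mul_conjc.
Qed.

Definition sig p x := \sum_(0 <= i < p) normc (ip x (e i)) ^+ 2.

Lemma S_nat p x : S p x = \sum_(0 <= i < p) ip x (e i) *: e i.
Proof. by rewrite big_mkord. Qed.

Lemma sig_mono x n : sig n x <= sig n.+1 x.
Proof. by rewrite /sig big_nat_recr //= lerDl sqr_ge0. Qed.

Lemma S_norm p x : hn (S p x) ^+ 2 = sig p x.
Proof. by rewrite (hnorm_sqr Hip) S_nat ip_seq_self // iota_uniq. Qed.

Lemma bessel p x : sig p x <= complex.Re (ip x x).
Proof.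
have o : ip (x - S p x) (S p x) = 0.
  rewrite /projON (ip_sumr Hip) big1 // => i _.
  by rewrite (ipZr Hip) (projON_orth_e Hip) ?mulr0 // ONall.
have := ip_expand Hip (x - S p x) (S p x); rewrite subrK o /= mulr0 addr0.
move=> ->; rewrite -S_norm (hnorm_sqr Hip) lerDr; exact: ipxx_ge0.
Qed.

Lemma S_diff p q x : (q <= p)%N -> hn (S p x - S q x) ^+ 2 = sig p x - sig q x.
Proof.
move=> qp; rewrite !S_nat (@big_cat_nat _ _ _ q 0 p) // /= addrC addrK.
rewrite (hnorm_sqr Hip) ip_seq_self ?iota_uniq //.
by rewrite /sig (@big_cat_nat _ _ _ q 0 p) // /= addrC addrK.
Qed.

Lemma S_cauchy x : forall eps : R, 0 < eps -> exists N : nat, forall p q : nat,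
   (N <= p)%N -> (N <= q)%N -> hn (S p x - S q x) < eps.
Proof.
move=> eps ep.
have [N HN] := @mono_cauchy _ (fun n => sig n x) _ (sig_mono x) (fun n => bessel n x) _ (mulr_gt0 ep ep).
exists N => p q Np Nq.
have key : forall p q, (N <= q)%N -> (q <= p)%N -> hn (S p x - S q x) < eps.
  move=> p' q' Nq' qp'; have h := HN _ _ Nq' qp'; rewrite -S_diff // in h.
  have g := hnorm_ge0 ip (S p' x - S q' x).
  by case: (lerP eps (hnorm ip (S p' x - S q' x))) => // H; nra.
case: (leqP q p) => qp; first exact: key.
by rewrite (hnormB Hip); apply: key => //; exact: ltnW.
Qed.

End Qsec.

Unset Implicit Arguments.

Section Q2.
Variables (R : realType) (V : lmodType R[i]) (ip : V -> V -> R[i]).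
Hypothesis Hip : is_inner_product ip.
Hypothesis Hc : complete_ip ip.
Local Notation C := R[i].
Local Notation hn := (hnorm ip).
Variable e : nat -> V.
Hypothesis He : forall i j, ip (e i) (e j) = ((i == j)%:R : C).
Variables (m : nat) (A : 'I_m -> V -> V).
Hypothesis HA : forall j, bounded_selfadjoint ip (A j).
Variable a : 'rV[R]_m.
Hypothesis Hcomp : forall j i l, ip (A j (e i)) (e l) = (a ord0 j)%:C * (i == l)%:R.

Local Notation S p x := (projON ip p e x).

Lemma Q_ex x : exists l, lim_to ip (fun p => S p x) l.
Proof. exact: Hc (S_cauchy Hip He x). Qed.

Definition Q x := proj1_sig (constructive_indefinite_description _ (Q_ex x)).

Lemma Q_lim x : lim_to ip (fun p => S p x) (Q x).
Proof. exact: proj2_sig (constructive_indefinite_description _ (Q_ex x)). Qed.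

Lemma Q_coef x n : ip (Q x) (e n) = ip x (e n).
Proof.
apply: (lim_ip_const Hip (Q_lim x) (N := n.+1)) => p np.
exact: (ip_projON_e Hip x (ONall He (p:=p)) np).
Qed.

Lemma Q_lin : is_linear_op Q.
Proof.
move=> c x y; apply: (lim_unique Hip (Q_lim (c *: x + y))).
apply: (lim_ext (u := fun p => c *: S p x + S p y)).
  by move=> p; rewrite (projON_lin Hip).
exact: (lim_add Hip (lim_scale Hip c (Q_lim x)) (Q_lim y)).
Qed.

Lemma S_le x p : hn (S p x) <= hn x.
Proof.
apply: sq_le_aux; first exact: hnorm_ge0.
by rewrite (S_norm Hip He) (hnorm_sqr Hip); exact: bessel.
Qed.

Lemma Q_bnd x : hn (Q x) <= 1 * hn x.
Proof.
rewrite mul1r; apply/ler_addgt0Pr => d dp.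
have [N h] := Q_lim x d dp; have h1 := h N (leqnn _).
rewrite (hnormB Hip) in h1.
have := hnormD Hip (Q x - S N x) (S N x); rewrite subrK => h2.
have := S_le x N; lra.
Qed.

Lemma Q_sa x y : ip (Q x) y = ip x (Q y).
Proof.
apply/eqP; rewrite -subr_eq0; apply/eqP.
apply: (normc_small2 (K := hn y + hn x)); first by rewrite addr_ge0 ?hnorm_ge0.
move=> d dp; have [N1 h1] := Q_lim x d dp; have [N2 h2] := Q_lim y d dp.
pose p := maxn N1 N2.
have a1 := h1 p (leq_maxl _ _); have a2 := h2 p (leq_maxr _ _).
rewrite (hnormB Hip) in a1; rewrite (hnormB Hip) in a2.
have E : ip (Q x) y - ip x (Q y) = ip (Q x - S p x) y - ip x (Q y - S p y).
  by rewrite (ipBl Hip) (ipBr Hip) (projON_sa Hip); ring.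
rewrite E; apply: le_trans (normcD _ _) _; rewrite normcN.
have c1 := CS Hip (Q x - S p x) y; have c2 := CS Hip x (Q y - S p y).
have g1 := hnorm_ge0 ip y; have g2 := hnorm_ge0 ip x.
have b1 : hn (Q x - S p x) * hn y <= d * hn y by apply: ler_wpM2r => //; exact: ltW.
have b2 : hn x * hn (Q y - S p y) <= hn x * d by apply: ler_wpM2l => //; exact: ltW.
lra.
Qed.

Lemma S_Q p x : S p (Q x) = S p x.
Proof. by apply: eq_bigr => i _; rewrite Q_coef. Qed.

Lemma Q_idem x : Q (Q x) = Q x.
Proof.
apply: (lim_unique Hip (Q_lim (Q x))).
by apply: (lim_ext (u := fun p => S p x)) (Q_lim x) => p; rewrite S_Q.
Qed.

Lemma Q_e n : Q (e n) = e n.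
Proof.
apply: (lim_unique Hip (Q_lim (e n))); apply: (lim_ev_const Hip (N := n.+1)) => p np.
exact: projON_e (ONall He (p:=p)) np.
Qed.

Lemma Q_inf : ~ finite_dim_sub (range Q).
Proof.
case=> r /dim_to_nat [f [_ Hf Hs]].
have M : forall i, exists c : nat -> C, (i < r.+1)%N -> e i = \sum_(l < r) c l *: f l.
  move=> i; have [c Hc'] := Hs (e i) (ex_intro _ (e i) (esym (Q_e i))).
  by exists c.
have [Mf HM] := choice' M.
have := indep_le (ON_indep Hip (ONall He (p:=r.+1))) (M := Mf) (fun i il => HM i il).
by rewrite ltnn.
Qed.

Lemma Q_A_coef x j n : ip (A j (Q x)) (e n) = (a ord0 j)%:C * ip x (e n).
Proof.
rewrite (HAs HA j).
apply: (lim_ip_const Hip (Q_lim x) (N := n.+1)) => p np.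
rewrite /projON (ip_suml Hip) mulrC -(sum_deltaR (fun i => ip x (e i) * (a ord0 j)%:C) np).
apply: eq_bigr => i _; rewrite (ipZl Hip) -(HAs HA j) Hcomp mulrA //.
Qed.

Lemma Q_comp j x : Q (A j (Q x)) = (a ord0 j)%:C *: Q x.
Proof.
apply: (lim_unique Hip (Q_lim (A j (Q x)))).
apply: (lim_ext (u := fun p => (a ord0 j)%:C *: S p x)); last exact: (lim_scale Hip (a ord0 j)%:C (Q_lim x)).
move=> p; rewrite /projON scaler_sumr; apply: eq_bigr => i _.
by rewrite Q_A_coef scalerA.
Qed.

Lemma Linf_of_seq : Lambda_inf ip A a.
Proof.
exists Q; split; last by move=> j x; exact: Q_comp.
split; last exact: Q_inf.
split; last exact: Q_idem.
split; last exact: Q_sa.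
split; first exact: Q_lin.
by exists 1 => x; exact: Q_bnd.
Qed.

End Q2.

Set Implicit Arguments.

Lemma real_of_conj (R : realType) (w : R[i]) : w = conjc w -> w = (complex.Re w)%:C.
Proof.
case: w => u v /= [] Hb; suff -> : v = 0 by [].
lra.
Qed.

Section Build.
Variables (V : Type) (g : seq V -> V).
Fixpoint build (n : nat) : seq V :=
  if n is n'.+1 then rcons (build n') (g (build n')) else [::].

Lemma size_build n : size (build n) = n.
Proof. by elim: n => //= n IH; rewrite size_rcons IH. Qed.

Lemma nth_build (x0 : V) n i : (i < n)%N -> nth x0 (build n) i = g (build i).
Proof.
elim: n => // n IH; rewrite ltnS leq_eqVlt => /orP [/eqP ->|il] /=.
  by rewrite nth_rcons size_build ltnn eqxx.
by rewrite nth_rcons size_build il IH.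
Qed.
End Build.

Section Seq.
Variables (R : realType) (V : lmodType R[i]) (ip : V -> V -> R[i]).
Hypothesis Hip : is_inner_product ip.
Hypothesis Hc : complete_ip ip.
Local Notation C := R[i].
Local Notation hn := (hnorm ip).
Variables (m : nat) (A : 'I_m -> V -> V).
Hypothesis HA : forall j, bounded_selfadjoint ip (A j).

Lemma W_Linf (Hinf : infinite_dimensional V) (a : 'rV[R]_m)
  (Hw : forall F : 'I_m -> V -> V,
     (forall j, bounded_selfadjoint ip (F j) /\ finite_rank (F j)) ->
     joint_num_range ip (add_tuple A F) a) :
  Lambda_inf ip A a.
Proof.
have St := step Hip HA Hinf Hw.
have [pick Hpick] := choice' St.
pose Tof := fun s : seq V => s ++ flatten [seq [seq A j x | j <- enum 'I_m] | x <- s].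
pose g := fun s => pick (Tof s).
pose e := fun i => g (build g i).
have inb : forall l i, (l < i)%N -> e l \in build g i.
  move=> l i li; rewrite /e -(nth_build g 0 li); apply: mem_nth; by rewrite size_build.
have P1 : forall i, ip (e i) (e i) = 1 by move=> i; case: (Hpick (Tof (build g i))).
have P2 : forall l i, (l < i)%N -> ip (e i) (e l) = 0.
  move=> l i li; case: (Hpick (Tof (build g i))) => _ H _; apply: H.
  by rewrite mem_cat inb.
have P3 : forall l i j, (l < i)%N -> ip (e i) (A j (e l)) = 0.
  move=> l i j li; case: (Hpick (Tof (build g i))) => _ H _; apply: H.
  rewrite mem_cat; apply/orP; right; apply/flattenP.
  exists [seq A j0 (e l) | j0 <- enum 'I_m]; first by apply: map_f; exact: inb.
  by apply: map_f; rewrite mem_enum.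
have P4 : forall i j, ip (A j (e i)) (e i) = (a ord0 j)%:C.
  move=> i j; rewrite (real_of_conj (w := ip (A j (e i)) (e i))); last first.
    by rewrite -(ipC Hip) (HAs HA).
  by rewrite /e /g; case: (Hpick (Tof (build g i))) => _ _ ->.
apply: (Linf_of_seq _ _ _ Hip Hc e _ m A HA a) => [i l|j i l].
  case: (ltngtP i l) => [il|li|->]; last by rewrite P1.
    by rewrite (ipC Hip) P2 // conjc0.
  by rewrite P2.
case: (ltngtP i l) => [il|li|->]; last by rewrite P4 mulr1.
  by rewrite (ipC Hip) P3 // conjc0 mulr0.
by rewrite (HAs HA) P3 // mulr0.
Qed.

End Seq.

Section Fin.
Variables (R : realType) (V : lmodType R[i]) (ip : V -> V -> R[i]).
Hypothesis Hip : is_inner_product ip.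
Local Notation C := R[i].
Local Notation hn := (hnorm ip).
Variables (m : nat) (A : 'I_m -> V -> V).
Hypothesis HA : forall j, bounded_selfadjoint ip (A j).

Lemma Lk_W (a : 'rV[R]_m) (HL : forall k, (0 < k)%N -> Lambda_k ip A k a)
  (F : 'I_m -> V -> V)
  (HF : forall j, bounded_selfadjoint ip (F j) /\ finite_rank (F j)) :
  joint_num_range ip (add_tuple A F) a.
Proof.
have Hsp : forall j : 'I_m, exists nf : nat * (nat -> V), spans (range (F j)) nf.1 nf.2.
  move=> j; case: (HF j) => _ [n Hn]; have [f [_ _ Hs]] := dim_to_nat Hn.
  by exists (n, f).
have [NF HNF] := choice' Hsp.
pose T := flatten [seq [seq (NF j).2 l | l <- iota 0 (NF j).1] | j <- enum 'I_m].
have [P [[HPo HPdim] HPc]] := HL (size T).+1 (ltn0Sn _).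
case: HPo => [[[HPl _] HPs] HPi].
have [f [Hfr Hfi _]] := dim_to_nat HPdim.
have [e0 [He0 He0U He0T]] := ON_in Hip (range_subsp HPl) Hfr Hfi (eq_leq (addn1 (size T))).
pose x := e0 0%N.
have xx : ip x x = 1 := ON_unit He0 (ltn0Sn 0).
have xP : P x = x by rewrite /x; case: (He0U 0%N (ltn0Sn 0)) => y ->; rewrite HPi.
have xT : forall t, t \in T -> ip x t = 0 by move=> t tT; exact: He0T.
have Fx0 : forall j, F j x = 0.
  move=> j; case: (HF j) => [[[HFl _] HFs] _].
  have orth : forall v, range (F j) v -> ip x v = 0.
    move=> v /(HNF j) [c ->]; rewrite (ip_sumr Hip) big1 // => l _.
    rewrite (ipZr Hip) xT ?mulr0 //; apply/flattenP.
    exists [seq (NF j).2 l0 | l0 <- iota 0 (NF j).1]; first by apply: map_f; rewrite mem_enum.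
    by apply: map_f; rewrite mem_iota add0n ltn_ord.
  apply: (ipxx_eq0 Hip); rewrite HFs orth //; by exists (F j x).
exists x; split; first exact: hnorm_unit xx.
move=> j; rewrite /add_tuple Fx0 addr0.
have -> : ip (A j x) x = (a ord0 j)%:C.
  rewrite -{1}xP -[X in ip _ X]xP -HPs HPc xP (ipZl Hip) xx mulr1 //.
by [].
Qed.

Lemma Linf_star (a : 'rV[R]_m) (HL : Lambda_inf ip A a) k : (0 < k)%N ->
  star_center (Lambda_k ip A k) a.
Proof.
move=> k0; case: HL => Q [[HQo HQinf] HQc].
case: HQo => [[[HQl _] HQs] HQi].
have rQ := range_subsp HQl.
have xQ : forall x, range Q x -> Q x = x by move=> x [y ->]; rewrite HQi.
have AQ : forall j u v, range Q u -> range Q v -> ip (A j u) v = (a ord0 j)%:C * ip u v.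
  move=> j u v hu hv.
  by rewrite -{1}(xQ u hu) -{1}(xQ v hv) -HQs HQc (ipZl Hip) (xQ u hu).
have QON : forall (T : seq V) (k : nat), exists g : nat -> V, [/\ ON ip k g, (forall i, (i < k)%N -> range Q (g i)) &
                  (forall i t, (i < k)%N -> t \in T -> ip (g i) t = 0)].
  move=> T k'; have [f [Hf Hi]] := grow rQ HQinf (size T + k').
  have HH := ON_in Hip rQ Hf Hi (leqnn _); exact: HH.
split.
  have [g [Hg HgQ _]] := QON [::] k.
  apply: (Lk_of_ON Hip (HAl HA) Hg) => j i l il ll.
  rewrite AQ; [by rewrite Hg|exact: HgQ|exact: HgQ].
move=> b [P [[HPo HPdim] HPc]] t /andP [t0 t1].
case: HPo => [[[HPl _] HPs] HPi].
have xP : forall x, range P x -> P x = x by move=> x [y ->]; rewrite HPi.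
have AP : forall j u v, range P u -> range P v -> ip (A j u) v = (b ord0 j)%:C * ip u v.
  move=> j u v hu hv.
  by rewrite -{1}(xP u hu) -{1}(xP v hv) -HPs HPc (ipZl Hip) (xP u hu).
have [f0 [Hf0r Hf0i _]] := dim_to_nat HPdim.
have [f [Hf HfP _]] := ON_in Hip (range_subsp HPl) Hf0r Hf0i (T := [::]) (k := k) (leqnn _).
pose T := [seq f i | i <- iota 0 k] ++
          flatten [seq [seq A j (f i) | j <- enum 'I_m] | i <- iota 0 k].
have [g [Hg HgQ HgT]] := QON T k.
have fT : forall i, (i < k)%N -> f i \in T.
  by move=> i il; rewrite mem_cat; apply/orP; left; apply: map_f; rewrite mem_iota.
have AfT : forall i j, (i < k)%N -> A j (f i) \in T.
  move=> i j il; rewrite mem_cat; apply/orP; right; apply/flattenP.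
  exists [seq A j0 (f i) | j0 <- enum 'I_m]; first by apply: map_f; rewrite mem_iota.
  by apply: map_f; rewrite mem_enum.
pose al := Num.sqrt (1 - t); pose be := Num.sqrt t.
have al2 : al * al = 1 - t by rewrite -expr2 sqr_sqrtr // subr_ge0.
have be2 : be * be = t by rewrite -expr2 sqr_sqrtr.
pose h := fun i => al%:C *: g i + be%:C *: f i.
have gf : forall i l, (i < k)%N -> (l < k)%N -> ip (g i) (f l) = 0.
  by move=> i l il ll; apply: HgT => //; exact: fT.
have fg : forall i l, (i < k)%N -> (l < k)%N -> ip (f i) (g l) = 0.
  by move=> i l il ll; rewrite (ipC Hip) gf // conjc0.
have Agf : forall j i l, (i < k)%N -> (l < k)%N -> ip (A j (g i)) (f l) = 0.
  by move=> j i l il ll; rewrite (HAs HA) HgT // AfT.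
have Afg : forall j i l, (i < k)%N -> (l < k)%N -> ip (A j (f i)) (g l) = 0.
  by move=> j i l il ll; rewrite (HAs HA) (ipC Hip) (HAs HA) HgT ?conjc0 // AfT.
have E1 : al%:C * al%:C + be%:C * be%:C = 1 :> C.
  by rewrite -!rmorphM al2 be2 -rmorphD subrK.
apply: (Lk_of_ON Hip (HAl HA) (e := h)).
  move=> i l il ll; rewrite /h !(ipDl Hip) !(ipDr Hip) !(ipZl Hip) !(ipZr Hip).
  rewrite gf // fg // Hg // Hf // !conjc_real.
  apply: (@eq_trans _ _ ((al%:C * al%:C + be%:C * be%:C) * ((i == l)%:R : C))).
    ring.
  by rewrite E1 mul1r.
move=> j i l il ll; rewrite /h (linD (HAl HA j)) !(linZ (HAl HA j)).
rewrite !(ipDl Hip) !(ipDr Hip) !(ipZl Hip) !(ipZr Hip).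
rewrite Agf // Afg // (AQ j (g i) (g l) (HgQ i il) (HgQ l ll)).
rewrite (AP j (f i) (f l) (HfP i il) (HfP l ll)) Hg // Hf // !conjc_real !mxE.
rewrite -al2 -be2 !rmorphD !rmorphM; ring.
Qed.

End Fin.

Close Scope complex_scope.

Theorem theorem4p2 (R : realType) (V : lmodType R[i]) (ip : V -> V -> R[i])
  (HH : hilbert_space ip) (Hinf : infinite_dimensional V)
  (m : nat) (A : 'I_m -> V -> V)
  (HA : forall j, bounded_selfadjoint ip (A j)) :
  (forall a : 'rV[R]_m,
     (Lambda_inf ip A a <->
        (forall k : nat, (0 < k)%N -> star_center (Lambda_k ip A k) a))
  /\ ((forall k : nat, (0 < k)%N -> star_center (Lambda_k ip A k) a) <->
        (forall k : nat, (0 < k)%N -> Lambda_k ip A k a))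
  /\ ((forall k : nat, (0 < k)%N -> Lambda_k ip A k a) <->
        (forall F : 'I_m -> V -> V,
           (forall j, bounded_selfadjoint ip (F j) /\ finite_rank (F j)) ->
           joint_num_range ip (add_tuple A F) a)))
  /\ convex_set (Lambda_inf ip A).
Proof.
case: HH => Hip Hc.
have LS : forall a, Lambda_inf ip A a ->
    forall k, (0 < k)%N -> star_center (Lambda_k ip A k) a.
  by move=> a H k k0; exact: (Linf_star Hip HA H k0).
have SL : forall a, (forall k, (0 < k)%N -> star_center (Lambda_k ip A k) a) ->
    forall k, (0 < k)%N -> Lambda_k ip A k a.
  by move=> a H k k0; case: (H k k0).
have LW : forall a, (forall k, (0 < k)%N -> Lambda_k ip A k a) ->
    forall F : 'I_m -> V -> V,
      (forall j, bounded_selfadjoint ip (F j) /\ finite_rank (F j)) ->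
      joint_num_range ip (add_tuple A F) a.
  by move=> a H F HF; exact: (Lk_W Hip H HF).
have WL : forall a, (forall F : 'I_m -> V -> V,
      (forall j, bounded_selfadjoint ip (F j) /\ finite_rank (F j)) ->
      joint_num_range ip (add_tuple A F) a) -> Lambda_inf ip A a.
  by move=> a H; exact: (W_Linf Hip Hc HA Hinf H).
split.
  move=> a; split; first by split; [exact: LS | move=> H; exact: WL (LW _ (SL _ H))].
  split; first by split; [exact: SL | move=> H; exact: LS (WL _ (LW _ H))].
  by split; [exact: LW | move=> H; exact: SL (LS _ (WL _ H))].
move=> c b hc hb t ht; apply: WL; apply: LW => k k0.
case: (LS c hc k k0) => _ Hseg; apply: Hseg => //.
by case: (LS b hb k k0).
Qed.
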